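(* Let $R$ be a commutative ring with ${\rm char}(R)\neq 2$ and $R_2\neq\{0\}$, let $G$ be a group with involution $\varphi$, and assume $(RG)^-_\varphi$ is commutative. Let $g,h\in G$ with $(g,h)\neq 1$. \begin{enumerate} \item If $g\in G_\varphi$ and $h\notin G_\varphi$, then $gh=\varphi(h)g$ and $hg=g\varphi(h)$. \item If $g,h\in G\setminus G_\varphi$, then $gh\notin G_\varphi$. \item If $g,h\in G\setminus G_\varphi$, then ${\rm char}(R)=4$, the subgroup $\langle g,h\rangle$ has the LC-property and has a unique non-trivial commutator, and $\varphi(g)=(g,h)g$ and $\varphi(h)=(g,h)h$. In particular, if ${\rm char}(R)\neq 4$ then $K=\langle x\in G\mid x\notin G_\varphi\rangle$ is abelian. \end{enumerate}
   Context: An involution on a group $G$ is a map $\varphi:G\to G$ with $\varphi(gh)=\varphi(h)\varphi(g)$ and $\varphi^2=\mathrm{id}$, extended $R$-linearly to $RG$. $G_\varphi=\{g\in G\mid\varphi(g)=g\}$; $(RG)^-_\varphi=\{\alpha\in RG\mid\varphi(\alpha)=-\alpha\}$; $R_2=\{r\in R\mid 2r=0\}$. The group commutator is $(g,h)=ghg^{-1}h^{-1}$. A group $H$ has the LC (lack of commutativity) property if for all $a,b\in H$: $ab=ba$ if and only if $a\in Z(H)$ or $b\in Z(H)$ or $ab\in Z(H)$. ''Unique non-trivial commutator'' means the set $\{(a,b)\mid a,b\in H\}$ has exactly one element different from $1$. *)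

(* Defs.v *)
From HB Require Import structures.
From mathcomp Require Import all_boot all_order all_algebra.
Set Implicit Arguments. Unset Strict Implicit. Unset Printing Implicit Defensive.
Import GRing.Theory.
Local Open Scope ring_scope.

Definition has_char (R : comNzRingType) (n : nat) : Prop :=
  forall m : nat, (m%:R == 0 :> R) = (n %| m)%N.

Definition R2_nontrivial (R : comNzRingType) : Prop :=
  exists r : R, r *+ 2 = 0 /\ r <> 0.

Definition is_involution (G : groupType) (phi : G -> G) : Prop :=
  (forall g h : G, phi (g * h)%g = (phi h * phi g)%g) /\ (forall g, phi (phi g) = g).

Definition pcomm (G : groupType) (g h : G) : G := (g * h * g^-1 * h^-1)%g.

Definition fixedp (G : groupType) (phi : G -> G) (g : G) : Prop := phi g = g.

(* The group ring RG: an element is represented by a finite formal sum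
   \sum r_i g_i (a list of pairs); two representatives denote the same
   element iff all their coefficients agree. *)
Definition RG (R : comNzRingType) (G : groupType) := seq (R * G).

Definition rg_coeff (R : comNzRingType) (G : groupType) (a : RG R G) (x : G) : R :=
  \sum_(p <- a | p.2 == x) p.1.

Definition rg_eq (R : comNzRingType) (G : groupType) (a b : RG R G) : Prop :=
  forall x, rg_coeff a x = rg_coeff b x.

Definition rg_mul (R : comNzRingType) (G : groupType) (a b : RG R G) : RG R G :=
  [seq (p.1 * q.1, (p.2 * q.2)%g) | p <- a, q <- b].

Definition rg_map (R : comNzRingType) (G : groupType) (phi : G -> G) (a : RG R G) : RG R G :=
  [seq (p.1, phi p.2) | p <- a].

Definition rg_skew (R : comNzRingType) (G : groupType) (phi : G -> G) (a : RG R G) : Prop :=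
  forall x, rg_coeff (rg_map phi a) x = - rg_coeff a x.

Definition skew_commutative (R : comNzRingType) (G : groupType) (phi : G -> G) : Prop :=
  forall a b : RG R G, rg_skew phi a -> rg_skew phi b -> rg_eq (rg_mul a b) (rg_mul b a).

Inductive gen (G : groupType) (S : G -> Prop) : G -> Prop :=
| gen_in  : forall x, S x -> gen S x
| gen_one : gen S 1%g
| gen_mul : forall x y, gen S x -> gen S y -> gen S (x * y)%g
| gen_inv : forall x, gen S x -> gen S (x^-1)%g.

Definition gen2 (G : groupType) (g h : G) : G -> Prop :=
  gen (fun x => x = g \/ x = h).

Definition centre (G : groupType) (H : G -> Prop) (z : G) : Prop :=
  H z /\ forall y, H y -> (z * y = y * z)%g.

Definition LC_property (G : groupType) (H : G -> Prop) : Prop :=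
  forall a b, H a -> H b ->
    ((a * b = b * a)%g <-> (centre H a \/ centre H b \/ centre H (a * b)%g)).

Definition unique_nontrivial_commutator (G : groupType) (H : G -> Prop) : Prop :=
  exists c : G, c <> 1%g /\ (exists a b, H a /\ H b /\ pcomm a b = c) /\
    forall a b, H a -> H b -> pcomm a b = 1%g \/ pcomm a b = c.

Definition abelian_sub (G : groupType) (H : G -> Prop) : Prop :=
  forall x y, H x -> H y -> (x * y = y * x)%g.

(* Main.v *)
Require Import Defs.
From HB Require Import structures.
From mathcomp Require Import all_boot all_order all_algebra.
Import GRing.Theory.
Local Open Scope ring_scope.

Local Open Scope group_scope.

Lemma comm_closed {G : groupType} (P : G -> Prop) (x : G) :
  (forall y, P y -> x * y = y * x) -> forall y, gen P y -> x * y = y * x.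
Proof.
move=> HP y; elim => {y} [y /HP //| |y1 y2 _ IH1 _ IH2| y _ IH].
- by rewrite mulg1 mul1g.
- by rewrite mulgA IH1 -mulgA IH2 mulgA.
- by apply: (mulgI y); rewrite mulgA -IH mulgK mulVKg.
Qed.

Lemma gen_abelian {G : groupType} (P : G -> Prop) :
  (forall x y, P x -> P y -> x * y = y * x) ->
  forall x y, gen P x -> gen P y -> x * y = y * x.
Proof.
move=> H x y Hx Hy; apply: (comm_closed _ _ _ y Hy) => s Ps.
by apply/esym; apply: (comm_closed _ _ _ x Hx) => t Pt; apply: H.
Qed.

Definition Sx {G : groupType} (c x y : G) := x * y = y * x \/ x * y = c * (y * x).
Definition Cm {G : groupType} (x y : G) : bool := x * y == y * x.

Lemma S_sym {G : groupType} (c x y : G) : c * c = 1 -> Sx c x y -> Sx c y x.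
Proof.
move=> cc [E|E]; [left|right]; first by rewrite E.
by rewrite E mulgA cc mul1g.
Qed.

Lemma S_mul {G : groupType} (c x y1 y2 : G) : c * c = 1 -> y1 * c = c * y1 ->
  Sx c x y1 -> Sx c x y2 -> Sx c x (y1 * y2).
Proof.
move=> cc yc [E1|E1] [E2|E2].
- by left; rewrite mulgA E1 -mulgA E2 mulgA.
- by right; rewrite mulgA E1 -mulgA E2 mulgA yc !mulgA.
- by right; rewrite mulgA E1 -!mulgA E2 !mulgA.
- left; rewrite mulgA E1 -!mulgA E2 !mulgA.
  by rewrite -(mulgA c y1 c) yc !mulgA cc mul1g.
Qed.

Lemma S_inv {G : groupType} (c x y : G) : c * c = 1 -> y * c = c * y ->
  Sx c x y -> Sx c x y^-1.
Proof.
move=> cc yc [E|E].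
  by left; apply: (mulgI y); rewrite mulgA -E mulgK mulVKg.
right; apply: (mulgI y).
have E' : y * x = c * (x * y) by rewrite E mulgA cc mul1g.
transitivity (c * x).
  by rewrite mulgA E' -(mulgA c) mulgK.
by rewrite mulgA yc -mulgA mulVKg.
Qed.

Lemma Cm_inv {G : groupType} (x y : G) : Cm x y^-1 = Cm x y.
Proof.
rewrite /Cm; apply/eqP/eqP => E.
  by apply: (mulgI y^-1); rewrite mulgA -E mulgVK mulKg.
by apply: (mulgI y); rewrite mulgA -E mulgK mulVKg.
Qed.

Lemma Cm_sym {G : groupType} (x y : G) : Cm x y = Cm y x.
Proof. by rewrite /Cm eq_sym. Qed.

Lemma S_notCm {G : groupType} (c x y : G) : c <> 1 -> x * y = c * (y * x) -> Cm x y = false.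
Proof.
move=> c1 E; apply/eqP => E'; apply: c1; apply: (mulIg (y * x)).
by rewrite -E E' mul1g.
Qed.

Lemma M_lem {G : groupType} (c x y1 y2 : G) : c * c = 1 -> c <> 1 -> y1 * c = c * y1 ->
  Sx c x y1 -> Sx c x y2 -> Cm x (y1 * y2) = (Cm x y1 == Cm x y2).
Proof.
move=> cc c1 yc [E1|E1] [E2|E2].
- have -> : Cm x (y1 * y2) by rewrite /Cm mulgA E1 -mulgA E2 mulgA.
  by rewrite /Cm E1 E2 !eqxx.
- have /(S_notCm _ _ _ c1) -> : x * (y1 * y2) = c * ((y1 * y2) * x).
    by rewrite mulgA E1 -mulgA E2 mulgA yc !mulgA.
  by rewrite (S_notCm _ _ _ c1 E2) /Cm E1 eqxx.
- have /(S_notCm _ _ _ c1) -> : x * (y1 * y2) = c * ((y1 * y2) * x).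
    by rewrite mulgA E1 -!mulgA E2 !mulgA.
  by rewrite (S_notCm _ _ _ c1 E1) /Cm E2 eqxx.
- have -> : Cm x (y1 * y2).
    rewrite /Cm mulgA E1 -!mulgA E2 !mulgA.
    by rewrite -(mulgA c y1 c) yc !mulgA cc mul1g.
  by rewrite (S_notCm _ _ _ c1 E1) (S_notCm _ _ _ c1 E2).
Qed.

Lemma taut_mul (ab1 ab2 ab hb1 hb2 hb gb1 gb2 gb ag ah : bool) :
  ab1 = ((hb1 || ag) == (gb1 || ah)) -> ab2 = ((hb2 || ag) == (gb2 || ah)) ->
  ab = (ab1 == ab2) -> hb = (hb1 == hb2) -> gb = (gb1 == gb2) ->
  ab = ((hb || ag) == (gb || ah)).
Proof. by move=> -> -> -> -> ->; case: hb1; case: hb2; case: gb1; case: gb2; case: ag; case: ah. Qed.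

Lemma Lc {G : groupType} {g h c : G} : c * g = g * c -> c * h = h * c ->
  forall x, gen2 g h x -> x * c = c * x.
Proof.
move=> cg ch x Hx; symmetry; apply: (comm_closed _ c _ x Hx) => y [->|->] //.
Qed.

Lemma Lx {G : groupType} {g h c : G} : c * g = g * c -> c * h = h * c -> c * c = 1 ->
  forall x, Sx c x g -> Sx c x h -> forall y, gen2 g h y -> Sx c x y.
Proof.
move=> cg ch cc x Sg Sh y; elim => {y} [y [->|->] //| |y1 y2 Hy1 IH1 _ IH2| y Hy IH].
- by left; rewrite mulg1 mul1g.
- by apply: S_mul => //; apply: (Lc cg ch).
- by apply: S_inv => //; apply: (Lc cg ch).
Qed.

Lemma Lall {G : groupType} {g h c : G} : c * g = g * c -> c * h = h * c -> c * c = 1 ->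
  g * h = c * (h * g) -> forall x y, gen2 g h x -> gen2 g h y -> Sx c x y.
Proof.
move=> cg ch cc ghc.
have Sgh : Sx c g h by right.
have Sgg : Sx c g g by left.
have Shh : Sx c h h by left.
have Shg : Sx c h g by apply: S_sym.
move=> x y Hx Hy; apply: (Lx cg ch cc) => //; apply: S_sym => //.
  exact: (Lx cg ch cc g Sgg Sgh x Hx).
exact: (Lx cg ch cc h Shg Shh x Hx).
Qed.

Lemma centre_of {G : groupType} (g h x : G) : gen2 g h x -> Cm x g -> Cm x h ->
  centre (gen2 g h) x.
Proof.
move=> Hx /eqP xg /eqP xh; split => // y Hy.
by apply: (comm_closed _ x _ y Hy) => z [->|->].
Qed.

Lemma Fform {G : groupType} {g h c : G} : c * g = g * c -> c * h = h * c -> c * c = 1 ->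
  c <> 1 -> g * h = c * (h * g) -> forall a b, gen2 g h a -> gen2 g h b ->
  Cm a b = ((Cm h b || Cm a g) == (Cm g b || Cm a h)).
Proof.
move=> cg ch cc c1 ghc a b Ha.
have ngh : Cm g h = false by apply: (S_notCm _ _ _ c1 ghc).
have nhg : Cm h g = false by rewrite Cm_sym.
have cgg : Cm g g by rewrite /Cm.
have chh : Cm h h by rewrite /Cm.
have L := Lall cg ch cc ghc.
have Hg : gen2 g h g by apply: gen_in; left.
have Hh : gen2 g h h by apply: gen_in; right.
elim => {b} [b [->|->]| |b1 b2 Hb1 IH1 Hb2 IH2| b Hb IH].
- by rewrite nhg cgg /=; case: (Cm a g); case: (Cm a h).
- by rewrite ngh chh /=; case: (Cm a g); case: (Cm a h).
- have e1 : forall x : G, Cm x 1 by move=> x; rewrite /Cm mulg1 mul1g.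
  by rewrite !e1.
- have Lc' := Lc cg ch _ Hb1.
  apply: (taut_mul _ _ _ _ _ _ _ _ _ _ _ IH1 IH2); apply: (M_lem c) => //; apply: L => //.
- by rewrite !Cm_inv.
Qed.

Lemma group_rel {G : groupType} (g h pg ph c : G) :
  pg * ph = g * h -> h * pg = g * h -> ph * g = g * h -> pg * h = g * ph ->
  h * g = g * ph -> pcomm g h = c ->
  [/\ ph = c * h, pg = c * g, c * c = 1, c * h = h * c &
      [/\ c * g = g * c & g * h = c * (h * g)]].
Proof.
move=> Hd Hf Hi Hc He hc.
have ghc : g * h = c * (h * g) by rewrite -hc /pcomm mulgA !mulgVK.
have eph : ph = c * h by rewrite -hc /pcomm mulgVK -Hi mulgK.
have epg : pg = g * c by apply: (mulIg h); rewrite Hc eph mulgA.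
have cc : c * c = 1.
  apply: (mulgI g); apply: (mulIg h).
  by rewrite mulg1 -Hd epg eph !mulgA.
have hcc : h = c * h * c.
  apply: (mulgI g).
  by rewrite -Hf epg mulgA He eph !mulgA.
have ch : c * h = h * c.
  by rewrite {2}hcc -mulgA cc mulg1.
have gcc : g = c * g * c.
  by apply: (mulIg h); rewrite ghc He eph !mulgA.
have cg : c * g = g * c.
  by rewrite {2}gcc -mulgA cc mulg1.
by split => //; rewrite epg.
Qed.

Lemma LC_lem {G : groupType} {g h c : G} : c * g = g * c -> c * h = h * c -> c * c = 1 ->
  c <> 1 -> g * h = c * (h * g) -> LC_property (gen2 g h).
Proof.
move=> cg ch cc c1 ghc a b Ha Hb; split.
- move=> Eab.
  have Hg : gen2 g h g by apply: gen_in; left.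
  have Hh : gen2 g h h by apply: gen_in; right.
  have L := Lall cg ch cc ghc.
  have F := Fform cg ch cc c1 ghc a b Ha Hb.
  have Mg := M_lem c g a b cc c1 (Lc cg ch _ Ha) (L _ _ Hg Ha) (L _ _ Hg Hb).
  have Mh := M_lem c h a b cc c1 (Lc cg ch _ Ha) (L _ _ Hh Ha) (L _ _ Hh Hb).
  have Cab : Cm a b by apply/eqP.
  case: (boolP (Cm a g && Cm a h)) => [/andP [ag ah]|nA].
    by left; apply: centre_of.
  case: (boolP (Cm b g && Cm b h)) => [/andP [bg bh]|nB].
    by right; left; apply: centre_of.
  right; right; apply: centre_of; first by apply: gen_mul.
    rewrite Cm_sym Mg.
    move: F nA nB; rewrite Cab (Cm_sym g a) (Cm_sym g b) (Cm_sym h b).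
    by case: (Cm a g); case: (Cm a h); case: (Cm b g); case: (Cm b h).
  rewrite Cm_sym Mh.
  move: F nA nB; rewrite Cab (Cm_sym h a) (Cm_sym g b) (Cm_sym h b).
  by case: (Cm a g); case: (Cm a h); case: (Cm b g); case: (Cm b h).
- case=> [[_ Ca]|[[_ Cb]|[_ Cab]]].
  + exact: Ca.
  + by rewrite Cb.
  + by apply: (mulgI a); rewrite -(Cab a Ha) -mulgA.
Qed.

Lemma uniq_lem {G : groupType} {g h c : G} : c * g = g * c -> c * h = h * c -> c * c = 1 ->
  c <> 1 -> g * h = c * (h * g) -> pcomm g h = c ->
  unique_nontrivial_commutator (gen2 g h).
Proof.
move=> cg ch cc c1 ghc hc; exists c; split => //; split.
  exists g, h; split; first by apply: gen_in; left.
  by split => //; apply: gen_in; right.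
move=> a b Ha Hb; case: (Lall cg ch cc ghc a b Ha Hb) => E; rewrite /pcomm E.
  by left; rewrite mulgK mulgV.
by right; rewrite mulgA mulgK mulgK.
Qed.

Local Close Scope group_scope.

Lemma natr_modn {R : comNzRingType} {n : nat} (m : nat) :
  (n%:R : R) = 0 -> (m%:R : R) = (m %% n)%N%:R.
Proof. by move=> Hn; rewrite {1}(divn_eq m n) natrD natrM Hn mulr0 add0r. Qed.

Lemma two_neq0 (R : comNzRingType) : ~ has_char R 2 -> (2%:R : R) != 0.
Proof.
move=> H; apply/negP=> /eqP H2; apply: H => m.
rewrite (natr_modn m H2) modn2 dvdn2; case: (odd m) => /=.
  by rewrite oner_eq0.
by rewrite eqxx.
Qed.

Lemma three_neq0 (R : comNzRingType) : R2_nontrivial R -> (3%:R : R) != 0.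
Proof.
case=> r [Hr2 Hr]; apply/negP=> /eqP H3; apply: Hr.
have : r *+ 3 = 0 by rewrite -mulr_natr H3 mulr0.
by rewrite mulrS Hr2 addr0.
Qed.

Lemma char4 (R : comNzRingType) : (4%:R : R) = 0 -> (2%:R : R) != 0 -> (3%:R : R) != 0 ->
  has_char R 4.
Proof.
move=> H4 H2 H3 m; rewrite (natr_modn m H4) /dvdn.
have : (m %% 4 < 4)%N by rewrite ltn_pmod.
case: (m %% 4)%N => [|[|[|[|k]]]] //= _; by rewrite ?eqxx ?oner_eq0 ?(negbTE H2) ?(negbTE H3).
Qed.

Lemma rearr (V : zmodType) (a b c d e f i j : V) :
  a - b - c + d = e - f - i + j -> a + d + f + i = b + c + e + j.
Proof.
move=> H; apply/eqP; rewrite -subr_eq0; apply/eqP.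
move/eqP: H; rewrite -subr_eq0 => /eqP <-.
rewrite !opprD !opprK !addrA.
rewrite (ACl (1*5*6*2*7*3*4*8)).
by [].
Qed.
Lemma coeff_cons {R : comNzRingType} {G : groupType} (r : R) (x : G) (l : RG R G) y :
  rg_coeff ((r, x) :: l) y = (if x == y then r else 0) + rg_coeff l y.
Proof. by rewrite /rg_coeff big_cons /=; case: eqP => //; rewrite add0r. Qed.

Lemma coeff_nil {R : comNzRingType} {G : groupType} (y : G) : rg_coeff ([::] : RG R G) y = 0.
Proof. by rewrite /rg_coeff big_nil. Qed.

Lemma skew_diff {R : comNzRingType} {G : groupType} (phi : G -> G) (x : G) :
  phi (phi x) = x -> rg_skew phi ([:: (1, x); (-1, phi x)] : RG R G).
Proof.
move=> Hx y; rewrite /rg_map /= !coeff_cons !coeff_nil Hx !addr0.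
case: (phi x == y); case: (x == y); rewrite ?addr0 ?add0r ?oppr0 ?opprK ?subrr ?oppr0 //.
Qed.

Lemma skew_fixed {R : comNzRingType} {G : groupType} (phi : G -> G) (r : R) (x : G) :
  r *+ 2 = 0 -> phi x = x -> rg_skew phi ([:: (r, x)] : RG R G).
Proof.
move=> Hr Hx y; rewrite /rg_map /= !coeff_cons !coeff_nil Hx !addr0.
case: (x == y); rewrite ?oppr0 //.
by apply/eqP; rewrite -addr_eq0 -mulr2n Hr.
Qed.

Lemma part1 {R : comNzRingType} {G : groupType} (phi : G -> G) (r : R) (g h : G) :
  r *+ 2 = 0 -> r <> 0 -> is_involution phi -> skew_commutative R phi ->
  phi g = g -> phi h <> h -> (g * h <> h * g)%g ->
  (g * h = phi h * g)%g /\ (h * g = g * phi h)%g.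
Proof.
move=> Hr2 Hr [_ Hinv] Hc Hg Hh Hgh.
have := Hc _ _ (skew_fixed phi r g Hr2 Hg) (skew_diff (R:=R) phi h (Hinv h)).
rewrite /rg_mul /= => E.
have E1 := E (g * h)%g; have E2 := E (h * g)%g.
rewrite !coeff_cons !coeff_nil !addr0 in E1 E2.
have n1 : ((g * phi h)%g == (g * h)%g) = false.
  by apply/eqP => /mulgI.
have n2 : ((h * g)%g == (g * h)%g) = false by apply/eqP => /esym.
have n3 : ((phi h * g)%g == (h * g)%g) = false by apply/eqP => /mulIg.
have n4 : ((g * h)%g == (h * g)%g) = false by apply/eqP.
rewrite eqxx n1 n2 addr0 add0r in E1.
rewrite eqxx n3 n4 addr0 add0r in E2.
split.
  case: eqP E1 => [->//|_]; rewrite mulr1 => /Hr //.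
case: eqP E2 => [->//|_]; rewrite mul1r => /esym /Hr //.
Qed.
Lemma count4 {R : comNzRingType} (b1 b2 b3 : bool) : (2%:R : R) != 0 -> (3%:R : R) != 0 ->
  ((1 + b1 + b2 + b3)%N%:R : R) = 0 -> [/\ b1, b2, b3 & (4%:R : R) = 0].
Proof.
move=> H2 H3; case: b1; case: b2; case: b3 => /= /eqP;
  rewrite ?oner_eq0 ?(negbTE H2) ?(negbTE H3) // => /eqP H; split => //. all: match goal with |- ?g => idtac g end.
Qed.

Lemma if1 {R : comNzRingType} (b : bool) : (if b then (1 : R) else 0) = (b : nat)%:R.
Proof. by case: b. Qed.

Lemma ifN1 {R : comNzRingType} (b : bool) : (if b then (-1 : R) else 0) = - (b : nat)%:R.
Proof. by case: b; rewrite ?oppr0. Qed.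

Lemma part3_ring {R : comNzRingType} {G : groupType} (phi : G -> G) (g h : G) :
  is_involution phi -> skew_commutative R phi ->
  (2%:R : R) != 0 -> (3%:R : R) != 0 ->
  phi g <> g -> phi h <> h -> (g * h <> h * g)%g -> phi (g * h)%g <> (g * h)%g ->
  [/\ (4%:R : R) = 0, (phi g * phi h = g * h)%g, (h * phi g = g * h)%g,
      (phi h * g = g * h)%g & ((phi g * h = g * phi h)%g /\ (h * g = g * phi h)%g)].
Proof.
move=> [Hm Hinv] Hc H2 H3 Hg Hh Hgh Hf.
have E := Hc _ _ (skew_diff (R:=R) phi g (Hinv g)) (skew_diff (R:=R) phi h (Hinv h)).
rewrite /rg_mul /= in E.
set pg := phi g in E Hg Hf *; set ph := phi h in E Hh Hf *.
have K : forall y, (((g * h == y)%g + (pg * ph == y)%g + (h * pg == y)%g + (ph * g == y)%g)%N%:R : R)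
   = (((g * ph == y)%g + (pg * h == y)%g + (h * g == y)%g + (ph * pg == y)%g)%N%:R).
  move=> y; have := E y; rewrite !coeff_cons coeff_nil !addr0.
  rewrite !mulrNN !mulr1 !mul1r !if1 !ifN1 !addrA => /rearr.
  by rewrite !natrD.
have phm : phi (g * h)%g = (ph * pg)%g by rewrite Hm.
have n1 : (g * ph == g * h)%g = false by apply/eqP => /mulgI.
have n2 : (pg * h == g * h)%g = false by apply/eqP => /mulIg.
have n3 : (h * g == g * h)%g = false by apply/eqP => /esym.
have n4 : (ph * pg == g * h)%g = false by apply/eqP; rewrite -phm.
have := K (g * h)%g; rewrite eqxx n1 n2 n3 n4 /= => Hk.
have [/eqP Hd /eqP Hf' /eqP Hi H4] := count4 _ _ _ H2 H3 Hk.
have m1 : (g * h == g * ph)%g = false by rewrite eq_sym.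
have m2 : (pg * ph == g * ph)%g = false by apply/eqP => /mulIg.
have := K (g * ph)%g; rewrite Hf' Hi m1 m2 eqxx /= => /esym Hk2.
have [/eqP Hc' /eqP He _] := count4 _ _ _ H2 H3 Hk2.
by split.
Qed.

Lemma part2 {R : comNzRingType} {G : groupType} (phi : G -> G) (r : R) (g h : G) :
  r *+ 2 = 0 -> r <> 0 -> is_involution phi -> skew_commutative R phi ->
  phi g <> g -> phi h <> h -> (g * h <> h * g)%g -> phi (g * h)%g <> (g * h)%g.
Proof.
move=> Hr2 Hr Hphi Hc Hg Hh Hgh Hf.
have ne : ((g * h) * g <> g * (g * h))%g.
  by move=> E; apply: Hgh; apply: (mulgI g); rewrite -E mulgA.
have [_ E2] := part1 phi r (g * h)%g g Hr2 Hr Hphi Hc Hf Hg ne.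
have E3 : (g * h = h * phi g)%g by apply: (mulgI g); rewrite E2 mulgA.
apply: Hh; apply: (mulIg (phi g)); rewrite -E3 -Hf.
by case: Hphi => ->.
Qed.

Lemma pcomm_ne {G : groupType} (g h : G) : pcomm g h <> 1%g -> (g * h <> h * g)%g.
Proof. by move=> H E; apply: H; rewrite /pcomm E mulgK mulgV. Qed.

Lemma pcomm1 {G : groupType} (a b : G) : pcomm a b = 1%g -> (a * b = b * a)%g.
Proof.
rewrite /pcomm => E.
have E' : (a * b * a^-1 = b)%g by apply: (mulIg (b^-1)%g); rewrite E mulgV.
by apply: (mulIg (a^-1)%g); rewrite E' mulgK.
Qed.

Theorem lemma2p4 (R : comNzRingType) (G : groupType) (phi : G -> G)
  (hchar2 : ~ has_char R 2) (hR2 : R2_nontrivial R)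
  (hphi : is_involution phi) (hcomm : skew_commutative R phi) :
  (forall g h : G, pcomm g h <> 1%g ->
     ((fixedp phi g -> ~ fixedp phi h ->
         (g * h = phi h * g)%g /\ (h * g = g * phi h)%g) /\
      (~ fixedp phi g -> ~ fixedp phi h -> ~ fixedp phi (g * h)%g) /\
      (~ fixedp phi g -> ~ fixedp phi h ->
         has_char R 4 /\ LC_property (gen2 g h) /\
         unique_nontrivial_commutator (gen2 g h) /\
         phi g = (pcomm g h * g)%g /\ phi h = (pcomm g h * h)%g))) /\
  (~ has_char R 4 -> abelian_sub (gen (fun x : G => ~ fixedp phi x))).
Proof.
have [r [Hr2 Hr]] := hR2.
have H2 := two_neq0 _ hchar2; have H3 := three_neq0 _ hR2.
have P3 : forall g h : G, pcomm g h <> 1%g -> ~ fixedp phi g -> ~ fixedp phi h ->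
    has_char R 4 /\ LC_property (gen2 g h) /\
    unique_nontrivial_commutator (gen2 g h) /\
    phi g = (pcomm g h * g)%g /\ phi h = (pcomm g h * h)%g.
  move=> g h c1 Hg Hh.
  have Hgh := pcomm_ne _ _ c1.
  have Hf := part2 phi r g h Hr2 Hr hphi hcomm Hg Hh Hgh.
  have [H4 Hd Hf' Hi [Hc He]] := part3_ring phi g h hphi hcomm H2 H3 Hg Hh Hgh Hf.
  have [eph epg cc ch [cg ghc]] := group_rel _ _ _ _ _ Hd Hf' Hi Hc He (erefl (pcomm g h)).
  split; first exact: char4.
  split; first exact: (LC_lem cg ch cc c1 ghc).
  split; first exact: (uniq_lem cg ch cc c1 ghc (erefl _)).
  by split.
split.
  move=> g h c1; split; [|split].
  - move=> Hg Hh; exact: (part1 phi r g h Hr2 Hr hphi hcomm Hg Hh (pcomm_ne _ _ c1)).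
  - move=> Hg Hh; exact: (part2 phi r g h Hr2 Hr hphi hcomm Hg Hh (pcomm_ne _ _ c1)).
  - exact: P3.
move=> N4 x y Hx Hy; apply: (gen_abelian _ _ x y Hx Hy) => a b Ha Hb.
case: (pcomm a b =P 1%g) => [/pcomm1 //|c1].
by case: N4; case: (P3 a b c1 Ha Hb).
Qed.
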